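(* Let $G$ be an undirected graph on $n$ vertices that is $\epsilon$-close to being connected, let $K$ be a positive integer and $\delta\in(0,1)$. For each vertex $v$, let $C(v)$ be its connected component and fix (independently of any randomness) a set $U(v)\subseteq C(v)$ with $v\in U(v)$, such that $U(v)=C(v)$ if $|C(v)|<K$ and $|U(v)|=K$ otherwise (for example, the first $K$ vertices visited by a breadth-first search from $v$). Assign to each vertex $v$ an independent uniformly random rank $r(v)\in(0,1]$, and call $v$ special if $r(v)<r(u)$ for all $u\in U(v)\setminus\{v\}$. Then with probability at least $1-\delta$, the number of special vertices is at most $\frac{n}{\delta K}+\epsilon m+1$.
   Context: $m$ is a fixed upper bound on the number of edges. $\mathrm{dist}(G_1,G_2)$ is the number of unordered vertex pairs that are an edge in exactly one graph, divided by $m$; $G$ is $\epsilon$-close to being connected if some connected graph $G'$ on the same vertex set has $\mathrm{dist}(G,G')\le\epsilon$. *)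

(* Defs.v *)
From HB Require Import structures.
From mathcomp Require Import all_boot all_order all_algebra.
Set Implicit Arguments. Unset Strict Implicit. Unset Printing Implicit Defensive.
Import Order.TTheory GRing.Theory Num.Theory.
Local Open Scope ring_scope.

Definition simple_graph (T : finType) (e : rel T) : Prop :=
  symmetric e /\ irreflexive e.

(* Number of ordered pairs (x,y) with e x y; for a simple graph this is
   twice the number of edges. *)
Definition ord_edge_count (T : finType) (e : rel T) : nat :=
  #|[set p : T * T | e p.1 p.2]|.

(* Number of ordered pairs on which e and e' disagree: twice the number of
   unordered pairs that are an edge in exactly one graph (for simple graphs). *)
Definition ord_diff_count (T : finType) (e e' : rel T) : nat :=
  #|[set p : T * T | e p.1 p.2 != e' p.1 p.2]|.

Definition gdist (R : realFieldType) (m : nat) (T : finType) (e e' : rel T) : R :=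
  ((ord_diff_count e e')%:R / 2%:R) / m%:R.

Definition connected_graph (T : finType) (e : rel T) : Prop :=
  forall x y : T, connect e x y.

Definition eps_close_connected (R : realFieldType) (m : nat) (T : finType)
    (e : rel T) (eps : R) : Prop :=
  exists e' : rel T, simple_graph e' /\ connected_graph e' /\ gdist R m e e' <= eps.

Definition comp (T : finType) (e : rel T) (v : T) : {set T} :=
  [set u | connect e v u].

Definition admissible_U (T : finType) (e : rel T) (K : nat) (U : T -> {set T}) : Prop :=
  forall v : T,
    [/\ v \in U v, U v \subset comp e v,
        (#|comp e v| < K)%N -> U v = comp e v
      & (K <= #|comp e v|)%N -> #|U v| = K].

(* Ranks: an injective map r : T -> 'I_#|T|, i.e. a uniformly random strict
   total order on the vertices. v is special if r v < r u for
   all u in U(v) \ {v}. *)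
Definition special (T : finType) (U : T -> {set T}) (r : {ffun T -> 'I_#|T|}) (v : T) : bool :=
  [forall u in U v :\ v, (r v < r u)%N].

Definition num_special (T : finType) (U : T -> {set T}) (r : {ffun T -> 'I_#|T|}) : nat :=
  #|[set v | special U r v]|.

Definition rank_prob (R : realFieldType) (T : finType) (P : {ffun T -> 'I_#|T|} -> bool) : R :=
  #|[set r : {ffun T -> 'I_#|T|} | injectiveb r && P r]|%:R /
  #|[set r : {ffun T -> 'I_#|T|} | injectiveb r]|%:R.

(* Main.v *)
Require Import Defs.
From HB Require Import structures.
From mathcomp Require Import all_boot all_order all_algebra.
From mathcomp Require Import zify.
Import Order.TTheory GRing.Theory Num.Theory.
Set Implicit Arguments. Unset Strict Implicit. Unset Printing Implicit Defensive.

Section Graph.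
Variables (T : finType) (e e' : rel T) (x0 : T).
Hypothesis esym : symmetric e.
Hypothesis e'sym : symmetric e'.
Hypothesis e'conn : forall y, connect e' x0 y.

Definition Pd (y : T) (n : nat) : bool :=
  [exists p : n.-tuple T, path e' x0 p && (last x0 p == y)].

Lemma Pd_ex y : exists n, Pd y n.
Proof.
have /connectP [p pp ->] := e'conn y.
exists (size p); apply/existsP; exists (in_tuple p); by rewrite /= pp eqxx.
Qed.

Definition gd y := ex_minn (Pd_ex y).

Lemma gd_le y n : Pd y n -> (gd y <= n)%N.
Proof. rewrite /gd; case: (ex_minnP (Pd_ex y)) => k _; apply. Qed.

Lemma gd_pos y : y != x0 -> exists2 w, e' w y & (gd w < gd y)%N.
Proof.
move=> ny; rewrite /gd; case: (ex_minnP (Pd_ex y)) => n /existsP [[p sp]] /=.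
move=> /andP [pp /eqP ly] _.
move: pp ly sp; case/lastP: p => [|q z] /=.
  by move=> _ ly; rewrite -ly eqxx in ny.
rewrite rcons_path last_rcons size_rcons => /andP [pq ez] ly /eqP sn; subst y n.
exists (last x0 q) => //.
apply: (@leq_ltn_trans (size q)) => //.
apply: gd_le; apply/existsP; exists (in_tuple q); by rewrite /= pq eqxx.
Qed.

Definition vof (s : T) := [arg min_(u < s | u \in Defs.comp e s) gd u].
Definition wof v := odflt v [pick w | e' w v && (gd w < gd v)%N].

Lemma wofP v : v != x0 -> e' (wof v) v && (gd (wof v) < gd v)%N.
Proof.
move=> nv; rewrite /wof; case: pickP => [w -> //|none].
have [w ew dw] := gd_pos nv; by move: (none w); rewrite ew dw.
Qed.

Lemma vofP s : vof s \in Defs.comp e s /\ forall u, u \in Defs.comp e s -> (gd (vof s) <= gd u)%N.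
Proof.
rewrite /vof; case: arg_minnP; first by rewrite inE connect0.
by move=> i Hi Hm; split.
Qed.

Lemma comp_count (S : {set T}) :
  x0 \in S -> {in S &, forall s t, connect e s t -> s = t} ->
  (2 * #|S| <= ord_diff_count e e' + 2)%N.
Proof.
move=> x0S Sdis.
pose f s := (wof (vof s), vof s).
pose S' := S :\ x0.
pose I := [set f s | s in S'].
pose J := [set (p.2, p.1) | p in I].
have csym := sym_connect_sym esym.
have finj : {in S' &, injective f}.
  move=> s t /setD1P [_ sS] /setD1P [_ tS] [_ eq].
  apply: Sdis => //.
  have [h1 _] := vofP s; have [h2 _] := vofP t.
  rewrite inE in h1; rewrite inE -eq csym in h2.
  exact: connect_trans h1 h2.
have cI : #|I| = #|S'| by rewrite card_in_imset.
have cJ : #|J| = #|I|.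
  by rewrite card_in_imset // => [[a b] [c d]] _ _ [-> ->].
have key : forall s, s \in S' ->
   [/\ e' (wof (vof s)) (vof s), e (wof (vof s)) (vof s) = false &
       (gd (wof (vof s)) < gd (vof s))%N].
  move=> s /setD1P [sx sS].
  have [vc vm] := vofP s.
  have vx : vof s != x0.
    apply/eqP => vx; move: vc; rewrite vx inE => /Sdis h.
    by move: sx; rewrite h ?eqxx.
  have /andP [ew dw] := wofP vx.
  split => //; apply/negP => ewv.
  have : wof (vof s) \in Defs.comp e s.
    rewrite /Defs.comp inE in vc; rewrite /Defs.comp inE; apply: (connect_trans vc); apply: connect1; by rewrite esym.
  by move/vm; rewrite leqNgt dw.
have ID : I \subset [set p : T * T | e p.1 p.2 != e' p.1 p.2].
  apply/subsetP => p /imsetP [s sS ->]; rewrite inE /=.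
  by have [-> -> _] := key s sS.
have JD : J \subset [set p : T * T | e p.1 p.2 != e' p.1 p.2].
  apply/subsetP => p /imsetP [q /imsetP [s sS ->] ->]; rewrite inE /=.
  by rewrite esym e'sym; have [-> -> _] := key s sS.
have IJ : I :&: J = set0.
  apply/setP => p; rewrite !inE; apply/negP => /andP [/imsetP [s sS ->]].
  case/imsetP => q /imsetP [t tS ->] [h1 h2].
  have [_ _ d1] := key s sS; have [_ _ d2] := key t tS.
  move: d1; rewrite h1 h2 => d1.
  by move: (ltn_trans d1 d2); rewrite ltnn.
have := subset_leq_card (introT subUsetP (conj ID JD)).
rewrite cardsU IJ cards0 subn0 cJ cI /ord_diff_count => h.
rewrite (cardsD1 x0 S) x0S -/S'; lia.
Qed.
End Graph.
Lemma card_sum (J : finType) (Q R : pred J) :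
  #|[set j | Q j && R j]| = \sum_(j | Q j) (R j : nat).
Proof.
rewrite -sum1_card big_mkcond [RHS]big_mkcond /=; apply: eq_bigr => j _.
by rewrite inE; case: (Q j); case: (R j).
Qed.

Lemma dcount (I J : finType) (P : pred I) (Q : pred J) (R : I -> J -> bool) :
  \sum_(i | P i) #|[set j | Q j && R i j]| = \sum_(j | Q j) #|[set i | P i && R i j]|.
Proof.
under eq_bigr do rewrite card_sum.
rewrite exchange_big /=; apply: eq_bigr => j _; by rewrite card_sum.
Qed.

Section Prob.
Variable T : finType.
Local Notation rk := {ffun T -> 'I_#|T|}.

Definition sw (a b : T) (x : T) := if x == a then b else if x == b then a else x.

Lemma swK a b : involutive (sw a b).
Proof.
move=> x; rewrite /sw.
case: (eqVneq x a) => [->|xa].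
  rewrite eqxx; case: (eqVneq b a) => [->|ba]; by rewrite ?eqxx.
case: (eqVneq x b) => [->|xb]; first by rewrite eqxx.
by rewrite (negPf xa) (negPf xb).
Qed.

Definition Aset (V : {set T}) (u : T) : {set rk} :=
  [set r : rk | injectiveb r && [forall w in V :\ u, (r u < r w)%N]].

Lemma A_le (V : {set T}) (v u : T) : v \in V -> u \in V -> (#|Aset V v| <= #|Aset V u|)%N.
Proof.
move=> vV uV.
pose g (r : rk) : rk := [ffun x => r (sw v u x)].
have gK : involutive g.
  by move=> r; apply/ffunP => x; rewrite !ffunE swK.
rewrite -(card_imset _ (can_inj gK)); apply: subset_leq_card.
apply/subsetP => _ /imsetP [r + ->]; rewrite !inE => /andP [/injectiveP ri /forallP rm].
apply/andP; split.
  apply/injectiveP => x y; rewrite !ffunE => /ri; exact: (can_inj (swK v u)).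
apply/forallP => w; apply/implyP => /setD1P [wu wV]; rewrite !ffunE.
have -> : sw v u u = v by rewrite /sw; case: (eqVneq u v) => [->|]; rewrite ?eqxx.
apply: (implyP (rm (sw v u w))); rewrite !inE.
rewrite /sw; case: (eqVneq w v) => [wv|wv].
  by rewrite -wv eq_sym wu uV.
by rewrite (negPf wu) wv wV.
Qed.

Lemma sumA (V : {set T}) : (\sum_(u in V) #|Aset V u| <= #|[set r : rk | injectiveb r]|)%N.
Proof.
have -> : \sum_(u in V) #|Aset V u| =
   \sum_(u in V) #|[set r : rk | true && (injectiveb r && [forall w in V :\ u, (r u < r w)%N])]|.
  by apply: eq_bigr => u _; apply: eq_card => r; rewrite !inE.
rewrite dcount.
have -> : #|[set r : rk | injectiveb r]| = \sum_(r : rk | true) (injectiveb r : nat).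
  by rewrite -card_sum; apply: eq_card => r; rewrite !inE.
apply: leq_sum => r _.
case: (boolP (injectiveb r)) => ri; last first.
  rewrite leqn0 cards_eq0; apply/eqP/setP => u; by rewrite !inE andbF.
apply/card_le1_eqP => x y; rewrite !inE => /andP [xV /andP [_ /forallP hx]] /andP [yV /andP [_ /forallP hy]].
apply/eqP; apply/negPn/negP => xy.
have l1 : (r x < r y)%N.
  apply: (implyP (hx y)); rewrite !inE yV andbT; first [done | by rewrite eq_sym].
have l2 : (r y < r x)%N.
  apply: (implyP (hy x)); rewrite !inE xV andbT; first [done | by rewrite eq_sym].
by move: (ltn_trans l1 l2); rewrite ltnn.
Qed.

Lemma A_bound (V : {set T}) (v : T) (K : nat) : v \in V -> #|V| = K ->
  (K * #|Aset V v| <= #|[set r : rk | injectiveb r]|)%N.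
Proof.
move=> vV <-; rewrite -sum_nat_const; apply: leq_trans (sumA V).
by apply: leq_sum => u uV; apply: A_le.
Qed.

End Prob.

Unset Implicit Arguments.
From mathcomp Require Import lra ring.
Local Open Scope ring_scope.

Theorem mainTheorem7 (R : realFieldType) (T : finType) (e : rel T) (m : nat)
    (eps delta : R) (K : nat) (U : T -> {set T}) :
  simple_graph e ->
  (0 < m)%N ->
  (ord_edge_count e <= 2 * m)%N ->
  @eps_close_connected R m T e eps ->
  (0 < K)%N ->
  0 < delta < 1 ->
  admissible_U e K U ->
  1 - delta <=
    @rank_prob R T (fun r => (num_special U r)%:R <=
        #|T|%:R / (delta * K%:R) + eps * m%:R + 1).
Proof.
move=> [esym eirr] m0 _ [e' [[e'sym _] [e'conn gdle]]] K0 /andP [d0 d1] adm.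
set n := #|T|.
pose Inj := [set r : {ffun T -> 'I_#|T|} | injectiveb r].
pose Big (v : T) := (K <= #|Defs.comp e v|)%N.
pose X (r : {ffun T -> 'I_#|T|}) := #|[set v | Big v && special U r v]|.
pose Sm (r : {ffun T -> 'I_#|T|}) := [set v | ~~ Big v && special U r v].
pose a : R := n%:R / (delta * K%:R).
pose Bad := [set r : {ffun T -> 'I_#|T|} | injectiveb r && (a < (X r)%:R)].
have N0 : (0 < #|Inj|)%N.
  apply/card_gt0P; exists [ffun x => enum_rank x]; rewrite inE.
  apply/injectiveP => x y; rewrite !ffunE; exact: enum_rank_inj.
have hsum : (K * \sum_(r : {ffun T -> 'I_#|T|} | injectiveb r) X r <= n * #|Inj|)%N.
  rewrite /X (dcount (fun r : {ffun T -> 'I_#|T|} => injectiveb r) (fun v => Big v)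
                (fun r v => special U r v)).
  rewrite big_distrr /=.
  apply: (@leq_trans (\sum_(v : T) #|Inj|)); last by rewrite sum_nat_const.
  rewrite [X in (_ <= X)%N](bigID (fun v => Big v)) /=; apply: leq_trans (leq_addr _ _).
  apply: leq_sum => v bv; have [vU _ _ cU] := adm v.
  have -> : [set r : {ffun T -> 'I_#|T|} | injectiveb r && special U r v] = Aset (U v) v by apply/setP => r; rewrite !inE.
  exact: A_bound vU (cU bv).
pose S := \sum_(r : {ffun T -> 'I_#|T|} | injectiveb r) X r.
have BadInj : Bad \subset Inj by apply/subsetP => r; rewrite !inE => /andP [].
have hB : (#|Bad|%:R : R) <= delta * #|Inj|%:R.
  have [n0|npos] := eqVneq n 0%N.
    have -> : Bad = set0.
      apply/setP => r; rewrite !inE; apply/negP => /andP [_].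
      have : (X r <= n)%N by apply: max_card.
      rewrite n0 leqn0 => /eqP ->; rewrite /a n0 -[0%:R]/(0 : R) mul0r ltxx.
      by [].
    by rewrite cards0 mulr_ge0 // ltW.
  have hS : (#|Bad|%:R * a <= (S%:R : R)).
    rewrite /S natr_sum.
    have -> : #|Bad|%:R * a = \sum_(r in Bad) a by rewrite sumr_const mulr_natl.
    apply: (@le_trans _ _ (\sum_(r in Bad) (X r)%:R)).
      apply: ler_sum => r; rewrite inE => /andP [_ h]; exact: ltW.
    rewrite [X in X <= _]big_mkcond [X in _ <= X]big_mkcond /=.
    apply: ler_sum => r _; rewrite inE.
    case: (boolP (injectiveb r)) => ri //=; case: ifP => _ //; exact: ler0n.
  have hK : K%:R * (S%:R : R) <= n%:R * #|Inj|%:R.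
    by rewrite -!natrM ler_nat.
  have Kp : (0 : R) < K%:R by rewrite ltr0n.
  have np : (0 : R) < n%:R by rewrite ltr0n lt0n.
  have dK : delta * K%:R != 0 by rewrite mulf_neq0 // ?gt_eqF.
  have e1 : #|Bad|%:R * a * (delta * K%:R) = #|Bad|%:R * n%:R.
    by rewrite /a -!mulrA mulVf ?mulr1.
  have : #|Bad|%:R * n%:R <= delta * #|Inj|%:R * n%:R.
    rewrite -e1.
    apply: (@le_trans _ _ (S%:R * (delta * K%:R))).
      by rewrite ler_pM2r ?mulr_gt0.
    rewrite (_ : S%:R * (delta * K%:R) = delta * (K%:R * S%:R)); last by ring.
    rewrite (_ : delta * #|Inj|%:R * n%:R = delta * (n%:R * #|Inj|%:R)); last by ring.
    by rewrite ler_pM2l.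
  by rewrite ler_pM2r.
have hSm : forall r : {ffun T -> 'I_#|T|}, (#|Sm r|%:R : R) <= eps * m%:R + 1.
  move=> r.
  have h2 : (2 * #|Sm r| <= ord_diff_count e e' + 2)%N.
    case: (set_0Vmem (Sm r)) => [->|[x0 x0S]]; first by rewrite cards0.
    apply: (comp_count esym e'sym (e'conn x0) x0S).
    move=> s t; rewrite !inE => /andP [bs ss] /andP [bt st] cst.
    have [_ _ sm _] := adm s; have [_ _ tm _] := adm t.
    rewrite /Big -ltnNge in bs; rewrite /Big -ltnNge in bt.
    have Us := sm bs; have Ut := tm bt.
    move: ss st; rewrite /special => /forallP ss /forallP st.
    apply/eqP; apply/negPn/negP => ne.
    have l1 : (r s < r t)%N.
      apply: (implyP (ss t)); rewrite !inE Us /Defs.comp inE cst andbT.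
      first [done | by rewrite eq_sym].
    have l2 : (r t < r s)%N.
      apply: (implyP (st s)); rewrite !inE Ut /Defs.comp inE.
      rewrite (sym_connect_sym esym) cst andbT.
      first [done | by rewrite eq_sym].
    by move: (ltn_trans l1 l2); rewrite ltnn.
  move: gdle; rewrite /gdist ler_pdivrMr ?ltr0n // => gd.
  move: h2; rewrite -(ler_nat R) natrD natrM => h2.
  lra.
rewrite /rank_prob.
set Ev := [set r | _ ].
have sub : Inj :\: Bad \subset Ev.
  apply/subsetP => r; rewrite !inE => /andP [nb ri]; rewrite ri /=.
  rewrite ri /= -leNgt in nb.
  rewrite -/a.
  have hc : (num_special U r <= X r + #|Sm r|)%N.
    rewrite /num_special; apply: leq_trans (leq_card_setU _ _).1.
    apply: subset_leq_card; apply/subsetP => v; rewrite !inE => sv; rewrite sv !andbT.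
    by case: (Big v).
  have := hSm r; move: hc; rewrite -(ler_nat R) natrD => hc.
  lra.
have cD : #|Inj :\: Bad| = (#|Inj| - #|Bad|)%N by rewrite cardsD (setIidPr BadInj).
have hE := subset_leq_card sub.
rewrite ler_pdivlMr ?ltr0n //.
apply: (@le_trans _ _ (#|Inj :\: Bad|%:R)); last by rewrite ler_nat.
rewrite cD natrB ?subset_leq_card //.
lra.
Qed.
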